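(* Let $A$ be an algebra over a field with multiplication $\star$ satisfying the Tortken identity $$(a\star b)\star(c\star d)-(a\star d)\star(c\star b)=(a,b,c)\star d-(a,d,c)\star b\quad\text{for all }a,b,c,d\in A.$$ (i) If $A$ has a right unit (an element $e$ with $a\star e=a$ for all $a$), then $a\star(b\star c+c\star b)=2(a\star b)\star c$ for all $a,b,c\in A$. (ii) If $A$ has a left unit (an element $e$ with $e\star a=a$ for all $a$), then $A$ is associative and commutative.
   Context: The associator is $(a,b,c)=a\star(b\star c)-(a\star b)\star c$. *)

(* Defs.v *)
From mathcomp Require Import all_boot all_algebra.
Set Implicit Arguments. Unset Strict Implicit. Unset Printing Implicit Defensive.
Import GRing.Theory.
Local Open Scope ring_scope.

Definition bilinear_mul (K : fieldType) (V : lmodType K) (mul : V -> V -> V) :=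
  (forall (k : K) (a b c : V), mul (k *: a + b) c = k *: mul a c + mul b c) /\
  (forall (k : K) (a b c : V), mul a (k *: b + c) = k *: mul a b + mul a c).

Definition assoc (K : fieldType) (V : lmodType K) (mul : V -> V -> V)
  (a b c : V) : V := mul a (mul b c) - mul (mul a b) c.

Definition tortken (K : fieldType) (V : lmodType K) (mul : V -> V -> V) :=
  forall a b c d : V,
    mul (mul a b) (mul c d) - mul (mul a d) (mul c b)
    = mul (assoc mul a b c) d - mul (assoc mul a d c) b.

(* Main.v *)
Require Import Defs.
From mathcomp Require Import all_boot all_algebra.
Local Open Scope ring_scope.
Import GRing.Theory.

Theorem mainTheorem2 (K : fieldType) (V : lmodType K) (mul : V -> V -> V)
  (Hbil : bilinear_mul mul) (Htk : tortken mul) :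
  ((exists e : V, forall a : V, mul a e = a) ->
     forall a b c : V, mul a (mul b c + mul c b) = 2%:R *: mul (mul a b) c) /\
  ((exists e : V, forall a : V, mul e a = a) ->
     (forall a b c : V, mul a (mul b c) = mul (mul a b) c) /\
     (forall a b : V, mul a b = mul b a)).
Proof.
have [HL HR] := Hbil.
have mul0l : forall c, mul 0 c = 0.
  move=> c; have := HL 1 0 0 c; rewrite !scale1r addr0 => H.
  by apply: (@addrI _ (mul 0 c)); rewrite addr0 -H.
have mulDr : forall a x y, mul a (x + y) = mul a x + mul a y.
  by move=> a x y; have := HR 1 a x y; rewrite !scale1r => ->.
split.
  move=> [e He] a b c.
  have Hae : forall d, mul a (mul e d) = mul a d.
    move=> d; have := Htk a e e d; rewrite /assoc !He subrr mul0l sub0r.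
    rewrite subrr oppr0 => /eqP; rewrite subr_eq0 => /eqP //.
  have := Htk a b c e; rewrite /assoc !He Hae subrr mul0l subr0 => H.
  rewrite mulDr scaler_nat mulr2n.
  apply/eqP; rewrite -subr_eq0; apply/eqP.
  have -> : mul a (mul b c) + mul a (mul c b) - (mul (mul a b) c + mul (mul a b) c)
     = (mul a (mul b c) - mul (mul a b) c) - (mul (mul a b) c - mul a (mul c b)).
    by rewrite opprB addrA opprD !addrA addrAC -!addrA; congr (_ + _); rewrite addrC addrA.
  by rewrite H subrr.
move=> [e He].
have H3 : forall b c d, mul b (mul c d) = mul d (mul c b).
  move=> b c d; have := Htk e b c d; rewrite /assoc !He !subrr !mul0l subrr.
  by move/eqP; rewrite subr_eq0 => /eqP.
have Hc : forall a b, mul a b = mul b a.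
  by move=> a b; have := H3 a e b; rewrite !He.
split=> //.
by move=> a b c; rewrite H3 Hc (Hc b a).
Qed.
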